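(* Let $F^r$ be the free group of rank $r$ and $s_*\colon F^r\to F^r$ an endomorphism whose image $\mathrm{Im}\,s_*$ is free of rank $r$. Let $s_*^{ab}\colon\mathbb Z^r\to\mathbb Z^r$ be the induced endomorphism of the abelianisation. Then: (1) $\lim^1(s_* )^n$ is trivial if and only if $s_*$ is an isomorphism; (2) if $s_*^{ab}$ is not an isomorphism, then $\lim^1(s_* )^n$ is not trivial.
   Context: $\lim^1(s_* )^n$ denotes $\lim^1$ of the inverse sequence $\cdots\to F^r\xrightarrow{s_*}F^r\xrightarrow{s_*}F^r$. For an inverse sequence of groups $\cdots\to A_1\xrightarrow{a_1}A_0$, $\lim^1$ is the pointed set of classes of $\prod_nA_n$ under $(x_n)\approx(y_n)$ iff $y_n=g_nx_na_{n+1}(g_{n+1}^{-1})$ for some $(g_n)$, based at the class of the identity; trivial means a single point. *)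

(* Defs.v *)
(* Concrete model of the free group F^r on generators x_0..x_{r-1}:
   elements are freely reduced words over letters (i, b), where (i,false) = x_i
   and (i,true) = x_i^{-1}. *)
From HB Require Import structures.
From mathcomp Require Import all_boot all_order all_algebra.
Set Implicit Arguments. Unset Strict Implicit. Unset Printing Implicit Defensive.
Import Order.TTheory GRing.Theory Num.Theory.

Definition letter (r : nat) := ('I_r * bool)%type.

Definition cancels r (x y : letter r) : bool := (x.1 == y.1) && (x.2 != y.2).

Definition reduced r (w : seq (letter r)) : bool :=
  sorted (fun x y => ~~ cancels x y) w.

Definition push r (x : letter r) (w : seq (letter r)) : seq (letter r) :=
  match w with
  | y :: w' => if cancels x y then w' else x :: w
  | [::] => [:: x]
  end.

Lemma push_reduced r (x : letter r) w : reduced w -> reduced (push x w).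
Proof.
case: w => [|y w] //= Hw.
case: ifP => Hc.
- exact: (path_sorted Hw).
- by rewrite /reduced /= Hc.
Qed.

Lemma foldr_push_reduced r (u v : seq (letter r)) :
  reduced v -> reduced (foldr (@push r) v u).
Proof. by move=> Hv; elim: u => [|x u IH] //=; apply: push_reduced. Qed.

Record FG (r : nat) := FGmk { fgw : seq (letter r); fgP : reduced fgw }.

Definition fg_one r : FG r := @FGmk r [::] isT.

Definition fg_mul r (u v : FG r) : FG r :=
  FGmk (foldr_push_reduced (fgw u) (fgP v)).

Definition flip r (x : letter r) : letter r := (x.1, ~~ x.2).

Definition fg_inv r (u : FG r) : FG r :=
  @FGmk r (foldr (@push r) [::] (rev (map (@flip r) (fgw u))))
    (foldr_push_reduced _ (isT : reduced (@nil (letter r)))).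

Definition fg_gen r (i : 'I_r) : FG r := @FGmk r [:: (i, false)] isT.

Definition fg_hom r (f : FG r -> FG r) : Prop :=
  forall u v, f (fg_mul u v) = fg_mul (f u) (f v).

(* Im f is a free group of rank r: it is the image of an injective
   homomorphism from F^r *)
Definition image_free_of_rank r (f : FG r -> FG r) : Prop :=
  exists phi : FG r -> FG r,
    [/\ fg_hom phi, injective phi &
        forall y, (exists x, phi x = y) <-> (exists x, f x = y)].

(* lim^1 of the inverse sequence ... -> F^r --s--> F^r --s--> F^r :
   (x_n) ~ (y_n) iff y_n = g_n x_n s(g_{n+1}^{-1}) for some (g_n). *)
Definition lim1_rel r (s : FG r -> FG r) (x y : nat -> FG r) : Prop :=
  exists g : nat -> FG r,
    forall n, y n = fg_mul (fg_mul (g n) (x n)) (s (fg_inv (g n.+1))).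

(* lim^1 is trivial: the pointed set of classes has a single point *)
Definition lim1_trivial r (s : FG r -> FG r) : Prop :=
  forall x y : nat -> FG r, lim1_rel s x y.

(* abelianisation map F^r -> Z^r (exponent sums) *)
Local Open Scope ring_scope.
Definition fg_ab r (u : FG r) : 'rV[int]_r :=
  \sum_(x <- fgw u) (if x.2 then -1 else 1) *: delta_mx 0 x.1.

Definition ab_map r (s : FG r -> FG r) (v : 'rV[int]_r) : 'rV[int]_r :=
  \sum_(i < r) v 0 i *: fg_ab (s (fg_gen i)).

(* Main.v *)
Require Import Defs.
From mathcomp Require Import all_boot all_order all_algebra all_fingroup.
From Stdlib Require Import Classical ClassicalEpsilon.
Set Implicit Arguments. Unset Strict Implicit. Unset Printing Implicit Defensive.

Definition wact r (a b : seq (letter r)) := foldr (@push r) b a.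
Definition rmf r (a : seq (letter r)) := rev (map (@flip r) a).

Lemma fg_eq r (u v : FG r) : fgw u = fgw v -> u = v.
Proof. case: u => a Ha; case: v => b Hb /= E; subst b; congr FGmk; exact: bool_irrelevance. Qed.

Lemma cancels_trans r (x y z : letter r) : cancels x y -> cancels y z -> x = z.
Proof.
case: x => i b; case: y => j c; case: z => k d; rewrite /cancels /=.
case/andP => /eqP -> H1 /andP [/eqP -> H2]; congr pair.
by case: b c d H1 H2 => [] [] [].
Qed.

Lemma push_push_cancel r (x y : letter r) w : reduced w -> cancels x y ->
  push x (push y w) = w.
Proof.
case: w => [|z w] /=; first by move=> _ ->.
move=> Hw Hxy; case: ifP => Hyz.
- have Exz := cancels_trans Hxy Hyz; subst z.
  case: w Hw => [|t w] //= /andP [Ht _]; by rewrite (negbTE Ht).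
- by rewrite /= Hxy.
Qed.

Lemma wact_push r (x : letter r) t w : reduced w -> wact (push x t) w = push x (wact t w).
Proof.
move=> Hw; case: t => [|y t] //=; case: ifP => // Hxy.
rewrite push_push_cancel //; exact: foldr_push_reduced.
Qed.

Lemma wact_act r (a b w : seq (letter r)) : reduced w -> wact (wact a b) w = wact a (wact b w).
Proof. move=> Hw; elim: a => [|x a IH] //=; by rewrite wact_push ?IH //; apply: foldr_push_reduced. Qed.

Lemma wact_nil_r r (a : seq (letter r)) : reduced a -> wact a [::] = a.
Proof.
elim: a => [|x a IH] //= Ha; rewrite IH; last exact: (path_sorted Ha).
case: a Ha {IH} => [|y a] //= /andP [H _]; by rewrite (negbTE H).
Qed.

Lemma flipK r : involutive (@flip r). Proof. by case=> i b; rewrite /flip /= negbK. Qed.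

Lemma rmfK r (a : seq (letter r)) : rmf (rmf a) = a.
Proof. by rewrite /rmf map_rev revK (mapK (@flipK r)). Qed.

Lemma wact_rmf r (a w : seq (letter r)) : reduced w -> wact (rmf a) (wact a w) = w.
Proof.
move=> Hw; elim: a => [|x a IH] //=.
rewrite /rmf map_cons rev_cons /wact foldr_rcons push_push_cancel //.
- exact: foldr_push_reduced.
- by rewrite /cancels /= eqxx; case: (x.2).
Qed.

Lemma fg_mulA r (u v w : FG r) : fg_mul (fg_mul u v) w = fg_mul u (fg_mul v w).
Proof. apply: fg_eq => /=; exact: (wact_act _ _ (fgP w)). Qed.

Lemma fg_mul1 r (u : FG r) : fg_mul (fg_one r) u = u.
Proof. exact: fg_eq. Qed.

Lemma fg_mulg1 r (u : FG r) : fg_mul u (fg_one r) = u.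
Proof. apply: fg_eq => /=; exact: (wact_nil_r (fgP u)). Qed.

Lemma fg_mulV r (u : FG r) : fg_mul (fg_inv u) u = fg_one r.
Proof.
apply: fg_eq => /=; have := wact_act (rmf (fgw u)) [::] (fgP u); rewrite /wact => ->.
have E := wact_rmf (fgw u) (isT : reduced (@nil (letter r))).
by rewrite (wact_nil_r (fgP u)) in E.
Qed.

Lemma fg_mulgV r (u : FG r) : fg_mul u (fg_inv u) = fg_one r.
Proof.
apply: fg_eq => /=; rewrite -[X in foldr _ _ X](rmfK (fgw u)).
exact: (wact_rmf (rmf (fgw u)) (isT : reduced (@nil (letter r)))).
Qed.

Lemma fg_inv_uniq r (a b : FG r) : fg_mul a b = fg_one r -> a = fg_inv b.
Proof.
move=> H; by rewrite -(fg_mulg1 a) -(fg_mulgV b) -fg_mulA H fg_mul1.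
Qed.

Lemma fg_invK r (u : FG r) : fg_inv (fg_inv u) = u.
Proof. by apply/esym/fg_inv_uniq; rewrite fg_mulgV. Qed.

Lemma fg_invM r (u v : FG r) : fg_inv (fg_mul u v) = fg_mul (fg_inv v) (fg_inv u).
Proof.
apply/esym/fg_inv_uniq; by rewrite fg_mulA -(fg_mulA (fg_inv u)) fg_mulV fg_mul1 fg_mulV.
Qed.

Lemma fg_cancel_l r (a b c : FG r) : fg_mul a b = fg_mul a c -> b = c.
Proof.
move=> H; by rewrite -(fg_mul1 b) -(fg_mulV a) fg_mulA H -fg_mulA fg_mulV fg_mul1.
Qed.

Lemma hom1 r (s : FG r -> FG r) : fg_hom s -> s (fg_one r) = fg_one r.
Proof.
move=> hs; apply: (@fg_cancel_l _ (s (fg_one r))); by rewrite -hs !fg_mulg1.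
Qed.

Lemma hom_inv r (s : FG r -> FG r) u : fg_hom s -> s (fg_inv u) = fg_inv (s u).
Proof. move=> hs; apply: fg_inv_uniq; by rewrite -hs fg_mulV hom1. Qed.

Definition fgl r (x : letter r) : FG r := @FGmk r [:: x] isT.

Lemma push_red r (x : letter r) a : reduced (x :: a) -> push x a = x :: a.
Proof. case: a => [|y a] //= /andP [H _]; by rewrite (negbTE H). Qed.

Lemma fg_ind r (P : FG r -> Prop) : P (fg_one r) ->
  (forall x u, P u -> P (fg_mul (fgl x) u)) -> forall u, P u.
Proof.
move=> H1 HS [a Ha]; elim: a Ha => [|x a IH] Ha.
- by have -> : FGmk Ha = fg_one r by apply: fg_eq.
- have Ha' : reduced a := path_sorted Ha.
  have -> : FGmk Ha = fg_mul (fgl x) (FGmk Ha') by apply: fg_eq => /=; rewrite push_red.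
  exact/HS/IH.
Qed.

Lemma fgl_false r (i : 'I_r) : fgl (i, false) = fg_gen i.
Proof. exact: fg_eq. Qed.
Lemma fgl_true r (i : 'I_r) : fgl (i, true) = fg_inv (fg_gen i).
Proof. exact: fg_eq. Qed.

Open Scope group_scope.

Definition ltr (gT : finGroupType) r (a : 'I_r -> gT) (x : letter r) : gT :=
  if x.2 then (a x.1)^-1 else a x.1.
Definition evs (gT : finGroupType) r (a : 'I_r -> gT) (w : seq (letter r)) : gT :=
  foldr (fun x p => ltr a x * p) 1 w.
Definition ev (gT : finGroupType) r (a : 'I_r -> gT) (u : FG r) : gT := evs a (fgw u).

Lemma ltr_cancel (gT : finGroupType) r (a : 'I_r -> gT) x y :
  cancels x y -> ltr a x * ltr a y = 1.
Proof.
case: x => i b; case: y => j c; rewrite /cancels /ltr /= => /andP [/eqP <-].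
by case: b; case: c => //= _; rewrite ?mulVg ?mulgV.
Qed.

Lemma evs_push (gT : finGroupType) r (a : 'I_r -> gT) x w :
  evs a (push x w) = ltr a x * evs a w.
Proof.
case: w => [|y w] //=; case: ifP => // H.
by rewrite mulgA ltr_cancel // mul1g.
Qed.

Lemma evs_act (gT : finGroupType) r (a : 'I_r -> gT) u w :
  evs a (wact u w) = evs a u * evs a w.
Proof. elim: u => [|x u IH] /=; first by rewrite mul1g. by rewrite evs_push IH mulgA. Qed.

Lemma ev_mul (gT : finGroupType) r (a : 'I_r -> gT) u v :
  ev a (fg_mul u v) = ev a u * ev a v.
Proof. exact: evs_act. Qed.

Lemma ev_one (gT : finGroupType) r (a : 'I_r -> gT) : ev a (fg_one r) = 1.
Proof. by []. Qed.

Lemma ev_inv (gT : finGroupType) r (a : 'I_r -> gT) u : ev a (fg_inv u) = (ev a u)^-1.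
Proof.
have H : ev a (fg_inv u) * ev a u = 1 by rewrite -ev_mul fg_mulV.
by rewrite -[LHS]mulg1 -(mulgV (ev a u)) mulgA H mul1g.
Qed.

Lemma ev_fgl (gT : finGroupType) r (a : 'I_r -> gT) x : ev a (fgl x) = ltr a x.
Proof. by rewrite /ev /= mulg1. Qed.

Lemma ev_ext (gT : finGroupType) r (a b : 'I_r -> gT) u :
  (forall i, a i = b i) -> ev a u = ev b u.
Proof.
move=> E; rewrite /ev; elim: (fgw u) => [|x w IH] //=; by rewrite IH /ltr E.
Qed.

Lemma ext_perm (T : finType) (D : {set T}) (f : T -> T) :
  {in D &, injective f} -> {p : {perm T} | forall x, x \in D -> p x = f x}.
Proof.
move=> finj.
pose C1 := enum (~: D); pose C2 := enum (~: (f @: D)).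
have Hsz : size C1 = size C2.
  rewrite /C1 /C2 -!cardE.
  have h1 := cardsC D; have h2 := cardsC (f @: D).
  rewrite (card_in_imset finj) in h2. 
  by apply/eqP; rewrite -(eqn_add2l #|D|) h1 h2.
pose g x := if x \in D then f x else nth x C2 (index x C1).
have gC x : x \notin D -> g x \in ~: (f @: D).
  move=> Hx; rewrite /g (negbTE Hx) -[_ \in ~: _]mem_enum; apply: mem_nth.
  by rewrite -Hsz index_mem /C1 mem_enum inE.
have ginj : injective g.
  move=> x y.
  case Hx: (x \in D); case Hy: (y \in D).
  - by rewrite /g Hx Hy; apply: finj.
  - move=> E; have := gC y (negbT Hy); rewrite -E /g Hx inE.
    by rewrite imset_f.
  - move=> E; have := gC x (negbT Hx); rewrite E /g Hy inE.
    by rewrite imset_f.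
  - rewrite /g Hx Hy.
    have x1 : x \in C1 by rewrite mem_enum inE Hx.
    have y1 : y \in C1 by rewrite mem_enum inE Hy.
    have ix : index x C1 < size C2 by rewrite -Hsz index_mem.
    have iy : index y C1 < size C2 by rewrite -Hsz index_mem.
    rewrite (set_nth_default y) //.
    move/eqP; rewrite nth_uniq ?enum_uniq // => /eqP.
    exact: index_inj.
exists (perm ginj) => x Hx; by rewrite permE /g Hx.
Qed.

Lemma red_nth r (x0 : letter r) (w : seq (letter r)) k :
  reduced w -> k.+1 < size w -> ~~ cancels (nth x0 w k) (nth x0 w k.+1).
Proof.
case: w => [|x w] //= /(pathP x0) H Hk; exact: H.
Qed.

Lemma RF_word r (x0 : letter r) (w : seq (letter r)) : reduced w -> 0 < size w ->
  exists N (a : 'I_r -> {perm 'I_N}), evs a w != 1.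
Proof.
move=> Hw Hm; set m := size w.
pose fwd (i : 'I_r) (k : nat) := (k < m) && (nth x0 w k == (i, false)).
pose bwd (i : 'I_r) (k : nat) := (0 < k) && (nth x0 w k.-1 == (i, true)).
pose D i := [set k : 'I_m.+1 | fwd i k || bwd i k].
pose f i (k : 'I_m.+1) : 'I_m.+1 := if fwd i k then inord k.+1 else inord k.-1.
have fval i (k : 'I_m.+1) : val (f i k) = if fwd i k then k.+1 else k.-1.
  rewrite /f; case: ifP => [/andP [H _]|_] /=; first by rewrite inordK.
  by rewrite inordK // (leq_ltn_trans (leq_pred _) (ltn_ord k)).
have finj i : {in D i &, injective (f i)}.
  move=> x y; rewrite !inE => Hx Hy /(congr1 val); rewrite !fval => E.
  apply: val_inj => /=.
  case Fx: (fwd i x) E; case Fy: (fwd i y) => E.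
  - by case: E.
  - move: Hy; rewrite Fy /= => /andP [y0 Ey].
    move: Fx => /andP [xm Ex].
    have Ey' : y.-1 = x.+1 by rewrite -E.
    have : ~~ cancels (nth x0 w x) (nth x0 w x.+1).
      apply: red_nth => //; rewrite -Ey'.
      by rewrite -ltnS (ltn_predK y0) -/m (ltn_ord y).
    by rewrite (eqP Ex) -Ey' (eqP Ey) /cancels /= eqxx.
  - move: Hx; rewrite Fx /= => /andP [x0' Ex].
    move: Fy => /andP [ym Ey].
    have Ex' : x.-1 = y.+1 by rewrite E.
    have : ~~ cancels (nth x0 w y) (nth x0 w y.+1).
      apply: red_nth => //; rewrite -Ex'.
      by rewrite -ltnS (ltn_predK x0') -/m (ltn_ord x).
    by rewrite (eqP Ey) -Ex' (eqP Ex) /cancels /= eqxx.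
  - move: Hx Hy; rewrite Fx Fy /= => /andP [x0' _] /andP [y0 _].
    by rewrite -(ltn_predK x0') -(ltn_predK y0) E.
pose a i := proj1_sig (ext_perm (finj i)).
have aE i k : k \in D i -> a i k = f i k := proj2_sig (ext_perm (finj i)) k.
exists m.+1, a.
have step k : k < m -> ltr a (nth x0 w k) (inord k) = inord k.+1.
  move=> km; case Ek: (nth x0 w k) => [i b]; case: b in Ek *; rewrite /ltr /=.
  - have Hin : (inord k.+1 : 'I_m.+1) \in D i.
      by rewrite inE /bwd inordK //= Ek eqxx orbT.
    have Hf : f i (inord k.+1) = inord k.
      apply: val_inj; rewrite fval /= /fwd !inordK ?ltnS ?(ltnW km) //.
      case: ifP => [/andP [k1 /eqP E1]|//].
      have := red_nth x0 Hw k1; by rewrite Ek E1 /cancels /= eqxx.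
    by rewrite -Hf -aE // permK.
  - have Hin : (inord k : 'I_m.+1) \in D i.
      by rewrite inE /fwd inordK ?ltnS ?(ltnW km) // km Ek eqxx.
    rewrite aE //; apply: val_inj; rewrite fval /fwd /= !inordK ?ltnS ?(ltnW km) //.
    by rewrite km Ek eqxx.
have key n k : k + n = m -> evs a (drop k w) (inord k) = inord m.
  elim: n k => [|n IH] k.
  - by rewrite addn0 => ->; rewrite drop_size /= perm1.
  - move=> Hk; have km : k < m by rewrite -Hk -addSnnS leq_addr.
    rewrite (drop_nth x0 km) /= permM step // IH //; by rewrite addSnnS.
apply/eqP => E1; have := key m 0 (add0n m); rewrite drop0 E1 perm1.
move/(congr1 val); rewrite /= !inordK //.
by move=> E0; move: Hm; rewrite -/m -E0.
Qed.

Lemma RF r (k : FG r) : k <> fg_one r ->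
  exists N (a : 'I_r -> {perm 'I_N}), ev a k != 1.
Proof.
case: k => [[|x w] Hw] H.
- by case: H; apply: fg_eq.
- exact: (RF_word x Hw).
Qed.

Lemma hom_ev r (gT : finGroupType) (p : FG r -> FG r) (a b : 'I_r -> gT) :
  fg_hom p -> (forall i, b i = ev a (p (fg_gen i))) ->
  forall u, ev b u = ev a (p u).
Proof.
move=> hp Hb; apply: fg_ind; first by rewrite hom1.
move=> [i c] u IH; rewrite ev_mul hp ev_mul IH ev_fgl; congr (_ * _).
case: c; rewrite /ltr /=.
- by rewrite fgl_true hom_inv // ev_inv Hb.
- by rewrite fgl_false Hb.
Qed.

Lemma hopf r (p : FG r -> FG r) : fg_hom p -> (forall v, exists u, p u = v) ->
  injective p.
Proof.
move=> hp sp u v E.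
pose k := fg_mul u (fg_inv v).
have pk : p k = fg_one r by rewrite /k hp hom_inv // E fg_mulgV.
case: (eqVneq (fgw k) [::]) => Hk.
  have k1 : k = fg_one r by apply: fg_eq.
  by rewrite -(fg_mulg1 u) -(fg_mulV v) -fg_mulA -/k k1 fg_mul1.
have [N [a0 Ha0]] : exists N (a : 'I_r -> {perm 'I_N}), ev a k != 1.
  by apply: RF => k1; move: Hk; rewrite k1.
pose T (a : {ffun 'I_r -> {perm 'I_N}}) : {ffun 'I_r -> {perm 'I_N}} :=
  [ffun i => ev a (p (fg_gen i))].
have evT a w : ev (T a) w = ev a (p w) by apply: hom_ev => // i; rewrite ffunE.
have Tinj : injective T.
  move=> a b E1; apply/ffunP => i.
  have H w : ev a w = ev b w.
    have [u' <-] := sp w; by rewrite -!evT E1.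
  have := H (fg_gen i); by rewrite /ev /= /ltr /= !mulg1.
have [Ti _ TK] := injF_bij Tinj.
pose b0 : {ffun 'I_r -> {perm 'I_N}} := [ffun i => a0 i].
move: Ha0; rewrite (@ev_ext _ _ a0 b0); last by move=> i; rewrite ffunE.
by rewrite -(TK b0) evT pk ev_one eqxx.
Qed.
Close Scope group_scope.
Import GRing.Theory.
Local Open Scope ring_scope.

Definition abl r (x : letter r) : 'rV[int]_r := (if x.2 then -1 else 1) *: delta_mx 0 x.1.

Lemma abl_cancel r (x y : letter r) : cancels x y -> abl x + abl y = 0.
Proof.
case: x => i b; case: y => j c; rewrite /cancels /abl /= => /andP [/eqP <-].
by case: b; case: c => //= _; rewrite scaleN1r scale1r ?addNr ?subrr.
Qed.

Lemma abs_push r (x : letter r) w :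
  \sum_(z <- push x w) abl z = abl x + \sum_(z <- w) abl z.
Proof.
case: w => [|y w] /=; first by rewrite big_seq1 big_nil addr0.
case: ifP => H; last by rewrite big_cons.
by rewrite big_cons addrA abl_cancel // add0r.
Qed.

Lemma abs_act r (a b : seq (letter r)) :
  \sum_(z <- wact a b) abl z = \sum_(z <- a) abl z + \sum_(z <- b) abl z.
Proof.
elim: a => [|x a IH] /=; first by rewrite big_nil add0r.
by rewrite abs_push IH big_cons addrA.
Qed.

Lemma fg_abE r (u : FG r) : fg_ab u = \sum_(z <- fgw u) abl z.
Proof. by []. Qed.

Lemma fg_ab_mul r (u v : FG r) : fg_ab (fg_mul u v) = fg_ab u + fg_ab v.
Proof. by rewrite !fg_abE abs_act. Qed.

Lemma fg_ab_inv r (u : FG r) : fg_ab (fg_inv u) = - fg_ab u.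
Proof.
apply/eqP; rewrite -subr_eq0 opprK -fg_ab_mul fg_mulV.
by rewrite fg_abE big_nil.
Qed.

Definition abM r (s : FG r -> FG r) : 'M[int]_r :=
  \matrix_(i, j) fg_ab (s (fg_gen i)) 0 j.

Lemma ab_mapE r (s : FG r -> FG r) v : ab_map s v = v *m abM s.
Proof.
apply/rowP => j; rewrite /ab_map !mxE summxE; apply: eq_bigr => i _.
by rewrite !mxE.
Qed.

Lemma row_abM r (s : FG r -> FG r) i : delta_mx 0 i *m abM s = fg_ab (s (fg_gen i)).
Proof. by rewrite -rowE; apply/rowP => j; rewrite !mxE. Qed.

Lemma fg_ab_hom r (s : FG r -> FG r) u : fg_hom s -> fg_ab (s u) = fg_ab u *m abM s.
Proof.
move=> hs; elim/fg_ind: u => [|x u IH].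
  by rewrite hom1 // fg_abE big_nil mul0mx.
rewrite hs !fg_ab_mul IH mulmxDl; congr (_ + _).
have -> : fg_ab (fgl x) = abl x by rewrite fg_abE /= big_seq1.
case: x => i [] /=; rewrite /abl /= -scalemxAl row_abM.
- by rewrite fgl_true hom_inv // fg_ab_inv scaleN1r.
- by rewrite fgl_false scale1r.
Qed.

Lemma fg_ab_gen r (i : 'I_r) : fg_ab (fg_gen i) = delta_mx 0 i.
Proof. by rewrite fg_abE big_seq1 /abl /= scale1r. Qed.

Lemma bij_ab r (s : FG r -> FG r) : fg_hom s -> bijective s -> bijective (ab_map s).
Proof.
move=> hs [t st ts].
have ht : fg_hom t.
  move=> u v; apply: (can_inj st); by rewrite hs !ts.
have M1 (s1 t1 : FG r -> FG r) : fg_hom s1 -> cancel t1 s1 -> abM t1 *m abM s1 = 1%:M.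
  move=> hs1 ts1; apply/row_matrixP => i.
  by rewrite row_mul rowE row_abM -fg_ab_hom // ts1 fg_ab_gen row1.
exists (ab_map t) => v; rewrite !ab_mapE -mulmxA.
- by rewrite (M1 _ _ ht st) mulmx1.
- by rewrite (M1 _ _ hs ts) mulmx1.
Qed.
Close Scope ring_scope.

Lemma s_inj r (s : FG r -> FG r) : fg_hom s -> image_free_of_rank s -> injective s.
Proof.
move=> hs [phi [hphi iphi Hphi]].
have ex u : exists x, phi x = s u by apply/Hphi; exists u.
pose psi u := epsilon (inhabits (fg_one r)) (fun x => phi x = s u).
have psiE u : phi (psi u) = s u := epsilon_spec _ _ (ex u).
have hpsi : fg_hom psi by move=> u v; apply: iphi; rewrite hphi !psiE hs.
have spsi v : exists u, psi u = v.
  have [u Hu] : exists u, s u = phi v by apply/Hphi; exists v.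
  by exists u; apply: iphi; rewrite psiE.
have ipsi := hopf hpsi spsi.
by move=> u v E; apply: ipsi; apply: iphi; rewrite !psiE.
Qed.

Lemma bij_lim1 r (s : FG r -> FG r) : fg_hom s -> bijective s -> lim1_trivial s.
Proof.
move=> hs [t st ts] x y.
pose g := fix gg n := match n with
  | 0 => fg_one r
  | n'.+1 => fg_inv (t (fg_mul (fg_inv (fg_mul (gg n') (x n'))) (y n')))
  end.
exists g => n /=; rewrite fg_invK ts -fg_mulA.
by rewrite fg_mulgV fg_mul1.
Qed.

Definition enumFG r (n : nat) : FG r :=
  FGmk (foldr_push_reduced (odflt [::] (unpickle n)) (isT : reduced (@nil (letter r)))).

Lemma enumFGK r (u : FG r) : enumFG r (pickle (fgw u)) = u.
Proof.
apply: fg_eq.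
have -> : forall n, fgw (enumFG r n) = foldr (@push r) [::] (odflt [::] (unpickle n)) by [].
rewrite pickleK; exact: (wact_nil_r (fgP u)).
Qed.

Lemma lim1_surj r (s : FG r -> FG r) : fg_hom s -> injective s -> lim1_trivial s ->
  forall v, exists u, s u = v.
Proof.
move=> hs si Hl.
apply: NNPP => Hn; have [c Hc] := not_all_ex_not _ _ Hn.
have Hc' u : s u <> c by move=> E; apply: Hc; exists u.
pose inh := inhabits (fg_one r).
pose pre z := epsilon inh (fun u => s u = z).
have preE u : pre (s u) = u.
  by apply: si; apply: (epsilon_spec inh (fun v => s v = s u)); exists u.
pose bit z : bool := if excluded_middle_informative (exists u, s u = z) then false else true.
pose nxt z := pre (if bit z then fg_mul (fg_inv c) z else z).
have L1 g' : bit (s g') = false /\ nxt (s g') = g'.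
  rewrite /nxt /bit.
  destruct (excluded_middle_informative (exists u, s u = s g')) as [H1|HH]; last by case: HH; exists g'.
  by split; rewrite ?preE.
have L2 z g' : z = fg_mul c (s g') -> bit z = true /\ nxt z = g'.
  move=> Ez; rewrite /nxt /bit.
  destruct (excluded_middle_informative (exists u, s u = z)) as [[u Hu]|H2].
    exfalso; apply: (Hc' (fg_mul u (fg_inv g'))).
    by rewrite hs hom_inv // Hu Ez fg_mulA fg_mulgV fg_mulg1.
  split => //=; by rewrite Ez -fg_mulA fg_mulV fg_mul1 preE.
pose y n := if bit (iter n nxt (enumFG r n)) then fg_one r else c.
have [g Hg] := Hl (fun _ => fg_one r) y.
have Hg' n : g n = fg_mul (y n) (s (g n.+1)).
  by rewrite Hg fg_mulg1 fg_mulA -hs fg_mulV hom1 // fg_mulg1.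
have Hn1 k : nxt (g k) = g k.+1.
  have := Hg' k; rewrite /y; case: (bit _) => E.
  - by rewrite fg_mul1 in E; rewrite E; case: (L1 (g k.+1)).
  - by case: (L2 _ _ E).
have It n : iter n nxt (g 0) = g n.
  by elim: n => [|n IH] //=; rewrite IH Hn1.
pose N := pickle (fgw (g 0)).
have := Hg' N; rewrite /y enumFGK It.
case Eb: (bit (g N)) => E.
- by rewrite fg_mul1 in E; case: (L1 (g N.+1)); rewrite -E Eb.
- by case: (L2 _ _ E); rewrite Eb.
Qed.

Theorem proposition4p6 (r : nat) (s : FG r -> FG r)
    (hs : fg_hom s) (him : image_free_of_rank s) :
  (lim1_trivial s <-> bijective s) /\
  (~ bijective (ab_map s) -> ~ lim1_trivial s).
Proof.
have si := s_inj hs him.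
have A : lim1_trivial s -> bijective s.
  move=> Hl; have ss := lim1_surj hs si Hl.
  pose inh := inhabits (fg_one r).
  pose t z := epsilon inh (fun u => s u = z).
  have tE z : s (t z) = z := epsilon_spec inh (fun u => s u = z) (ss z).
  exists t => u; last exact: tE.
  by apply: si; rewrite tE.
split; first by split; [exact: A | exact: bij_lim1].
by move=> Hab Hl; apply: Hab; apply: bij_ab => //; exact: A.
Qed.
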